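(* Let $X$ be a compact subset of a real normed vector space $(V,\|\cdot\|)$. Fix $\varepsilon>0$ and a continuous $f:X\to\mathbb R$ such that $af(x)\le\varepsilon+a\|x\|$ for all $x\in X$ and $a\in[0,1]$. Define, for $y\in X$, $$\hat f(y)=\inf_{a\in[0,1],\,b\in(0,1],\,x\in X}\frac1b\big(\varepsilon+\|ax-by\|-af(x)\big).$$ Then the following hold. 1. For every $y\in X$, $-\|y\|\le\hat f(y)\le -f(y)+\varepsilon$. 2. $\hat f$ is $1$-Lipschitz on $X$. 3. For all $x,y\in X$ and $a,b\in[0,1]$, $a\hat f(x)-b\hat f(y)\le a\varepsilon+\|by-ax\|$. *)

(* Defs.v *)
From Stdlib Require Import Reals Lra List ClassicalEpsilon.
Open Scope R_scope.

Record NormedSpace := {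
  vcar :> Type;
  vzero : vcar;
  vadd : vcar -> vcar -> vcar;
  vopp : vcar -> vcar;
  vscal : R -> vcar -> vcar;
  vnorm : vcar -> R;
  vadd_assoc : forall x y z, vadd x (vadd y z) = vadd (vadd x y) z;
  vadd_comm : forall x y, vadd x y = vadd y x;
  vadd_0 : forall x, vadd x vzero = x;
  vadd_opp : forall x, vadd x (vopp x) = vzero;
  vscal_1 : forall x, vscal 1 x = x;
  vscal_assoc : forall a b x, vscal a (vscal b x) = vscal (a * b) x;
  vscal_distr_v : forall a x y, vscal a (vadd x y) = vadd (vscal a x) (vscal a y);
  vscal_distr_r : forall a b x, vscal (a + b) x = vadd (vscal a x) (vscal b x);
  vnorm_eq0 : forall x, vnorm x = 0 -> x = vzero;
  vnorm_scal : forall a x, vnorm (vscal a x) = Rabs a * vnorm x;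
  vnorm_triangle : forall x y, vnorm (vadd x y) <= vnorm x + vnorm y
}.

Arguments vzero {_}.
Arguments vadd {_}.
Arguments vopp {_}.
Arguments vscal {_}.
Arguments vnorm {_}.

Definition vsub {V : NormedSpace} (x y : V) : V := vadd x (vopp y).

Definition nopen {V : NormedSpace} (U : V -> Prop) : Prop :=
  forall x, U x -> exists r, 0 < r /\ forall z, vnorm (vsub z x) < r -> U z.

Definition ncompact {V : NormedSpace} (X : V -> Prop) : Prop :=
  forall (I : Type) (U : I -> V -> Prop),
    (forall i, nopen (U i)) ->
    (forall x, X x -> exists i, U i x) ->
    exists l : list I, forall x, X x -> exists i, In i l /\ U i x.

Definition ncontinuous_on {V : NormedSpace} (X : V -> Prop) (f : V -> R) : Prop :=
  forall x, X x -> forall e, 0 < e -> exists d, 0 < d /\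
    forall z, X z -> vnorm (vsub z x) < d -> Rabs (f z - f x) < e.

(* Greatest lower bound and infimum (arbitrary value if no glb exists). *)
Definition nis_glb (E : R -> Prop) (m : R) : Prop :=
  (forall r, E r -> m <= r) /\ (forall m', (forall r, E r -> m' <= r) -> m' <= m).

Definition Rinf (E : R -> Prop) : R :=
  epsilon (inhabits 0) (fun m => nis_glb E m).

Definition fhat {V : NormedSpace} (X : V -> Prop) (eps : R) (f : V -> R) (y : V) : R :=
  Rinf (fun r => exists a b x, 0 <= a <= 1 /\ 0 < b <= 1 /\ X x /\
          r = / b * (eps + vnorm (vsub (vscal a x) (vscal b y)) - a * f x)).

(* Main.v *)
Require Import Defs.
From Stdlib Require Import Reals Lra ClassicalEpsilon.
Open Scope R_scope.

Lemma vscal0 (V : NormedSpace) (x : V) : vscal 0 x = vzero.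
Proof.
  pose proof (vscal_distr_r V 0 0 x) as H. rewrite Rplus_0_l in H.
  transitivity (vadd (vscal 0 x) (vadd (vscal 0 x) (vopp (vscal 0 x)))).
  - rewrite vadd_opp, vadd_0; reflexivity.
  - rewrite vadd_assoc, <- H, vadd_opp. reflexivity.
Qed.

Lemma vadd_0l (V : NormedSpace) (x : V) : vadd vzero x = x.
Proof. rewrite vadd_comm; apply vadd_0. Qed.

Lemma vopp_scal (V : NormedSpace) (x : V) : vopp x = vscal (-1) x.
Proof.
  assert (H : vadd x (vscal (-1) x) = vzero).
  { rewrite <- (vscal_1 V x) at 1. rewrite <- vscal_distr_r.
    replace (1 + -1) with 0 by ring. apply vscal0. }
  rewrite <- (vadd_0 V (vopp x)), <- H, vadd_assoc.
  rewrite (vadd_comm V (vopp x) x), vadd_opp, vadd_0l. reflexivity.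
Qed.

Lemma vnorm0 (V : NormedSpace) : vnorm (@vzero V) = 0.
Proof. rewrite <- (vscal0 V vzero), vnorm_scal, Rabs_R0; ring. Qed.

Lemma vnorm_opp (V : NormedSpace) (x : V) : vnorm (vopp x) = vnorm x.
Proof.
  rewrite vopp_scal, vnorm_scal, Rabs_left by lra; ring.
Qed.

Lemma vsub_scal (V : NormedSpace) c (u v : V) :
  vscal c (vsub u v) = vsub (vscal c u) (vscal c v).
Proof.
  unfold vsub. rewrite vscal_distr_v, !vopp_scal, !vscal_assoc.
  replace (c * -1) with (-1 * c) by ring. reflexivity.
Qed.

Lemma vsub_norm_comm (V : NormedSpace) (u v : V) :
  vnorm (vsub u v) = vnorm (vsub v u).
Proof.
  assert (H : vsub v u = vscal (-1) (vsub u v)).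
  { rewrite vsub_scal. unfold vsub. rewrite !vopp_scal, vscal_assoc. replace (-1 * -1) with 1 by ring.
    rewrite vscal_1, vadd_comm. reflexivity. }
  rewrite H, vnorm_scal, Rabs_left by lra; ring.
Qed.

Lemma vsub_split (V : NormedSpace) (u v w : V) :
  vsub u w = vadd (vsub u v) (vsub v w).
Proof.
  unfold vsub. rewrite vadd_assoc. f_equal.
  rewrite <- vadd_assoc, (vadd_comm V (vopp v) v), vadd_opp, vadd_0.
  reflexivity.
Qed.

Lemma vtri (V : NormedSpace) (u v w : V) :
  vnorm (vsub u w) <= vnorm (vsub u v) + vnorm (vsub v w).
Proof. rewrite (vsub_split V u v w). apply vnorm_triangle. Qed.

Lemma vsub_0r (V : NormedSpace) (u : V) : vsub u vzero = u.
Proof.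
  unfold vsub.
  assert (H : vopp (@vzero V) = vzero).
  { rewrite <- (vadd_0l V (vopp vzero)). apply vadd_opp. }
  rewrite H; apply vadd_0.
Qed.

Lemma vsub_0l (V : NormedSpace) (u : V) : vnorm (vsub vzero u) = vnorm u.
Proof. unfold vsub. rewrite vadd_0l. apply vnorm_opp. Qed.

Lemma glb_exists (E : R -> Prop) m r0 :
  E r0 -> (forall r, E r -> m <= r) -> nis_glb E (Rinf E).
Proof.
  intros H0 Hm. unfold Rinf. apply epsilon_spec.
  destruct (completeness (fun x => E (-x))) as [l [Hub Hl]].
  - exists (-m). intros x Hx. specialize (Hm _ Hx). lra.
  - exists (-r0). rewrite Ropp_involutive. exact H0.
  - exists (-l). split.
    + intros r Er. assert (-r <= l). { apply Hub. rewrite Ropp_involutive; exact Er. } lra.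
    + intros m' Hm'. assert (l <= -m').
      { apply Hl. intros x Hx. specialize (Hm' _ Hx). lra. } lra.
Qed.

Definition S (V : NormedSpace) (X : V -> Prop) (eps : R) (f : V -> R) (y : V) :=
  fun r => exists a b x, 0 <= a <= 1 /\ 0 < b <= 1 /\ X x /\
          r = / b * (eps + vnorm (vsub (vscal a x) (vscal b y)) - a * f x).

Lemma S_lb (V : NormedSpace) (X : V -> Prop) (eps : R) (f : V -> R)
  (hbound : forall x a, X x -> 0 <= a <= 1 -> a * f x <= eps + a * vnorm x) y r :
  S V X eps f y r -> - vnorm y <= r.
Proof.
  intros [a [b [x [Ha [Hb [Hx ->]]]]]].
  pose proof (hbound x a Hx Ha) as H1.
  pose proof (vtri V (vscal a x) (vscal b y) vzero) as H2.
  rewrite !vsub_0r, !vnorm_scal, !Rabs_pos_eq in H2 by lra.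
  assert (Hib : / b * b = 1) by (field; lra).
  assert (0 < / b) by (apply Rinv_0_lt_compat; lra).
  set (N := vnorm (vsub (vscal a x) (vscal b y))) in *.
  assert (HT : - b * vnorm y <= eps + N - a * f x) by lra.
  apply (Rmult_le_compat_l (/ b)) in HT; [|lra].
  replace (/ b * (- b * vnorm y)) with (- vnorm y) in HT by (field; lra).
  exact HT.
Qed.

Lemma glb_y (V : NormedSpace) (X : V -> Prop) (eps : R) (f : V -> R)
  (hbound : forall x a, X x -> 0 <= a <= 1 -> a * f x <= eps + a * vnorm x) y :
  X y -> nis_glb (S V X eps f y) (fhat X eps f y).
Proof.
  intros Hy. unfold fhat.
  apply (glb_exists _ (- vnorm y) (/1 * (eps + vnorm (vsub (vscal 1 y) (vscal 1 y)) - 1 * f y))).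
  - exists 1, 1, y. repeat split; try lra; auto.
  - apply S_lb; auto.
Qed.

Theorem lemma1 (V : NormedSpace) (X : V -> Prop) (eps : R) (f : V -> R)
  (hX : ncompact X) (heps : 0 < eps) (hf : ncontinuous_on X f)
  (hbound : forall x a, X x -> 0 <= a <= 1 -> a * f x <= eps + a * vnorm x) :
  (forall y, X y -> - vnorm y <= fhat X eps f y <= - f y + eps) /\
  (forall x y, X x -> X y -> Rabs (fhat X eps f x - fhat X eps f y) <= vnorm (vsub x y)) /\
  (forall x y a b, X x -> X y -> 0 <= a <= 1 -> 0 <= b <= 1 ->
     a * fhat X eps f x - b * fhat X eps f y
       <= a * eps + vnorm (vsub (vscal b y) (vscal a x))).
Proof.
  assert (LB : forall y, X y -> - vnorm y <= fhat X eps f y).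
  { intros y Hy. apply (proj2 (glb_y V X eps f hbound y Hy)). apply S_lb; auto. }
  assert (LIP : forall y y', X y -> X y' ->
            fhat X eps f y' <= fhat X eps f y + vnorm (vsub y y')).
  { intros y y' Hy Hy'.
    cut (fhat X eps f y' - vnorm (vsub y y') <= fhat X eps f y). { lra. }
    apply (proj2 (glb_y V X eps f hbound y Hy)).
    intros r [a [b [x [Ha [Hb [Hx ->]]]]]].
    assert (H1 : fhat X eps f y' <=
       / b * (eps + vnorm (vsub (vscal a x) (vscal b y')) - a * f x)).
    { apply (proj1 (glb_y V X eps f hbound y' Hy')). exists a, b, x. auto. }
    pose proof (vtri V (vscal a x) (vscal b y) (vscal b y')) as H2.
    rewrite <- vsub_scal, vnorm_scal, Rabs_pos_eq in H2 by lra.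
    assert (Hib : / b * b = 1) by (field; lra).
    assert (0 < / b) by (apply Rinv_0_lt_compat; lra).
    set (N := vnorm (vsub (vscal a x) (vscal b y))) in *.
    set (N' := vnorm (vsub (vscal a x) (vscal b y'))) in *.
    assert (HT : eps + N' - a * f x <= (eps + N - a * f x) + b * vnorm (vsub y y')) by lra.
    apply (Rmult_le_compat_l (/ b)) in HT; [|lra].
    replace (/ b * ((eps + N - a * f x) + b * vnorm (vsub y y'))) with
      (/ b * (eps + N - a * f x) + vnorm (vsub y y')) in HT by (field; lra).
    lra. }
  split; [|split].
  - intros y Hy. split. apply LB; auto.
    apply (proj1 (glb_y V X eps f hbound y Hy)).
    exists 1, 1, y. repeat split; try lra; auto.
    rewrite vscal_1. unfold vsub. rewrite vadd_opp, vnorm0. field.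
  - intros x y Hx Hy. apply Rabs_le.
    pose proof (LIP x y Hx Hy). pose proof (LIP y x Hy Hx).
    rewrite vsub_norm_comm in H0. lra.
  - intros x y a b Hx Hy Ha Hb.
    destruct (Req_dec a 0) as [Ha0|Ha0].
    { subst a. rewrite vscal0, vsub_0r, vnorm_scal, Rabs_pos_eq by lra.
      pose proof (LB y Hy). nra. }
    destruct (Req_dec b 0) as [Hb0|Hb0].
    { subst b. rewrite vscal0, vsub_0l, vnorm_scal, Rabs_pos_eq by lra.
      assert (fhat X eps f x <= eps + vnorm x).
      { apply (proj1 (glb_y V X eps f hbound x Hx)).
        exists 0, 1, x. repeat split; try lra; auto.
        rewrite vscal0, vsub_0l, vscal_1. field. }
      nra. }
    set (M := vnorm (vsub (vscal b y) (vscal a x))).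
    assert (Hbp : 0 < b) by lra. assert (Hap : 0 < a) by lra.
    cut (/ b * (a * fhat X eps f x - a * eps - M) <= fhat X eps f y).
    { intro H. assert (b * (/ b * (a * fhat X eps f x - a * eps - M)) <= b * fhat X eps f y)
        by (apply Rmult_le_compat_l; lra).
      replace (b * (/ b * (a * fhat X eps f x - a * eps - M))) with
        (a * fhat X eps f x - a * eps - M) in H0 by (field; lra). lra. }
    apply (proj2 (glb_y V X eps f hbound y Hy)).
    intros r [a' [b' [x' [Ha' [Hb' [Hx' ->]]]]]].
    set (c := b / b').
    assert (Hc : 0 < c) by (unfold c; apply Rdiv_lt_0_compat; lra).
    assert (Hc1 : b <= c).
    { unfold c. apply (Rmult_le_reg_r b'); [lra|]. unfold Rdiv.
      rewrite Rmult_assoc, Rinv_l by lra. nra. }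
    set (s := a + c).
    set (al := / s * (c * a')). set (be := / s * a).
    assert (Hs : 0 < s) by (unfold s; lra).
    assert (Hal : 0 <= al <= 1).
    { unfold al. split. apply Rmult_le_pos. left; apply Rinv_0_lt_compat; lra. nra.
      apply (Rmult_le_reg_l s); [lra|]. rewrite <- Rmult_assoc, Rinv_r by lra. unfold s. nra. }
    assert (Hbe : 0 < be <= 1).
    { unfold be. split. apply Rmult_lt_0_compat. apply Rinv_0_lt_compat; lra. lra.
      apply (Rmult_le_reg_l s); [lra|]. rewrite <- Rmult_assoc, Rinv_r by lra. unfold s. nra. }
    assert (H1 : fhat X eps f x <=
       / be * (eps + vnorm (vsub (vscal al x') (vscal be x)) - al * f x')).
    { apply (proj1 (glb_y V X eps f hbound x Hx)). exists al, be, x'. auto. }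
    set (N := vnorm (vsub (vscal (c * a') x') (vscal a x))).
    assert (HN : vnorm (vsub (vscal al x') (vscal be x)) = / s * N).
    { unfold al, be, N. rewrite <- !vscal_assoc, <- vsub_scal, vnorm_scal, Rabs_pos_eq.
      reflexivity. left; apply Rinv_0_lt_compat; lra. }
    set (K := vnorm (vsub (vscal a' x') (vscal b' y))).
    assert (HK : N <= c * K + M).
    { pose proof (vtri V (vscal (c * a') x') (vscal b y) (vscal a x)) as H2.
      replace (vscal b y) with (vscal c (vscal b' y)) in H2 at 1.
      2:{ rewrite vscal_assoc. f_equal. unfold c. field. lra. }
      rewrite <- vscal_assoc, <- vsub_scal, vnorm_scal, Rabs_pos_eq in H2 by lra.
      rewrite vscal_assoc in H2. exact H2. }
    rewrite HN in H1.
    assert (E1 : a * (/ be * (eps + / s * N - al * f x')) = s * eps + N - c * a' * f x').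
    { unfold be, al. field. split; lra. }
    assert (E2 : b * (/ b' * (eps + K - a' * f x')) = c * eps + c * K - c * a' * f x').
    { unfold c. field. lra. }
    assert (H3 : a * fhat X eps f x <= a * (/ be * (eps + / s * N - al * f x')))
      by (apply Rmult_le_compat_l; lra).
    rewrite E1 in H3.
    apply (Rmult_le_reg_l b); [lra|].
    replace (b * (/ b * (a * fhat X eps f x - a * eps - M))) with
        (a * fhat X eps f x - a * eps - M) by (field; lra).
    fold K. rewrite E2. unfold s in H3. lra.
Qed.
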